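(* Let $t>0$, $a=(a_1,a_2,a_3):=(0,t,1/t)$, and let $\beta=\beta(t)\in(0,1)$ be defined by $\frac{t+i}{t-i}=e^{2\pi i\beta}$. Let $\mu$ be a real number and suppose there is a constant $C>0$ such that $$\left|\beta-\frac{n}{m}\right|\geq\frac{C}{m^\mu}\quad\text{for all } n,m\in\mathbb Z,\ m\ne0.$$ Then there is a constant $D>0$ such that $$\left|\det M_{m,2,a}\right|\geq\frac{D}{m^{2\mu-2}}\quad\text{for all integers } m\ge1.$$
   Context: For real $s$, $A(s):=\frac{s+i}{s-i}$, and $A_j:=A(a_j)$. For $m\ge0$, $M_{m,2,a}$ is the $4\times4$ matrix with rows $(1,1,1,1)$ and $(1,A_j,A_j^{m+3},A_j^{m+4})$ for $j=1,2,3$. *)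

(* Defs.v *)
From HB Require Import structures.
From mathcomp Require Import all_boot all_order all_algebra.
From mathcomp Require Import all_classical all_reals all_analysis.
From mathcomp Require Import complex.

Set Implicit Arguments. Unset Strict Implicit. Unset Printing Implicit Defensive.
Import Order.TTheory GRing.Theory Num.Theory.
Local Open Scope ring_scope.
Local Open Scope complex_scope.

Definition Amob (R : realType) (s : R) : R[i] := (s%:C + 'i) / (s%:C - 'i).

Definition Mmat (R : realType) (m : nat) (a1 a2 a3 : R) : 'M[R[i]]_4 :=
  \matrix_(r < 4, k < 4)
    if r == 0 :> nat then 1
    else let x := Amob (if r == 1 :> nat then a1 else if r == 2 :> nat then a2 else a3) in
         if k == 0 :> nat then 1
         else if k == 1 :> nat then x
         else if k == 2 :> nat then x ^+ (m + 3)
         else x ^+ (m + 4).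

Definition expi (R : realType) (th : R) : R[i] := (cos th) +i* (sin th).

(* Main.v *)
Require Import Defs.
From HB Require Import structures.
From mathcomp Require Import all_boot all_order all_algebra.
From mathcomp Require Import all_classical all_reals all_analysis.
From mathcomp Require Import complex.
From mathcomp Require Import ring lra.
Import Order.TTheory GRing.Theory Num.Theory.
Local Open Scope ring_scope.
Local Open Scope complex_scope.
Lemma det4 (F : comRingType) (e : nat -> nat -> F) :
  \det (\matrix_(i < 4, j < 4) e i j) = e 0%N 0%N*e 1%N 1%N*e 2%N 2%N*e 3%N 3%N - e 0%N 0%N*e 1%N 1%N*e 2%N 3%N*e 3%N 2%N - e 0%N 0%N*e 1%N 2%N*e 2%N 1%N*e 3%N 3%N + e 0%N 0%N*e 1%N 2%N*e 2%N 3%N*e 3%N 1%N + e 0%N 0%N*e 1%N 3%N*e 2%N 1%N*e 3%N 2%N - e 0%N 0%N*e 1%N 3%N*e 2%N 2%N*e 3%N 1%N - e 0%N 1%N*e 1%N 0%N*e 2%N 2%N*e 3%N 3%N + e 0%N 1%N*e 1%N 0%N*e 2%N 3%N*e 3%N 2%N + e 0%N 1%N*e 1%N 2%N*e 2%N 0%N*e 3%N 3%N - e 0%N 1%N*e 1%N 2%N*e 2%N 3%N*e 3%N 0%N - e 0%N 1%N*e 1%N 3%N*e 2%N 0%N*e 3%N 2%N + e 0%N 1%N*e 1%N 3%N*e 2%N 2%N*e 3%N 0%N + e 0%N 2%N*e 1%N 0%N*e 2%N 1%N*e 3%N 3%N - e 0%N 2%N*e 1%N 0%N*e 2%N 3%N*e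 3%N 1%N - e 0%N 2%N*e 1%N 1%N*e 2%N 0%N*e 3%N 3%N + e 0%N 2%N*e 1%N 1%N*e 2%N 3%N*e 3%N 0%N + e 0%N 2%N*e 1%N 3%N*e 2%N 0%N*e 3%N 1%N - e 0%N 2%N*e 1%N 3%N*e 2%N 1%N*e 3%N 0%N - e 0%N 3%N*e 1%N 0%N*e 2%N 1%N*e 3%N 2%N + e 0%N 3%N*e 1%N 0%N*e 2%N 2%N*e 3%N 1%N + e 0%N 3%N*e 1%N 1%N*e 2%N 0%N*e 3%N 2%N - e 0%N 3%N*e 1%N 1%N*e 2%N 2%N*e 3%N 0%N - e 0%N 3%N*e 1%N 2%N*e 2%N 0%N*e 3%N 1%N + e 0%N 3%N*e 1%N 2%N*e 2%N 1%N*e 3%N 0%N.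
Proof.
rewrite (expand_det_row _ ord0) /cofactor !big_ord_recl big_ord0.
rewrite !(expand_det_row _ ord0) /cofactor !big_ord_recl !big_ord0.
rewrite !(expand_det_row _ ord0) /cofactor !big_ord_recl !big_ord0.
rewrite !det_mx11 !mxE /= /bump /=.
ring.
Qed.
Definition MX (F : fieldType) (m : nat) (x1 x2 x3 : F) : 'M[F]_4 :=
  \matrix_(r < 4, k < 4)
    if r == 0 :> nat then 1
    else let x := (if r == 1 :> nat then x1 else if r == 2 :> nat then x2 else x3) in
         if k == 0 :> nat then 1
         else if k == 1 :> nat then x
         else if k == 2 :> nat then x ^+ (m + 3)
         else x ^+ (m + 4).
Arguments MX {F}.
Lemma detX (F : fieldType) (m : nat) (x1 x2 x3 : F) :
  \det (MX m x1 x2 x3) = 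
(1 * x1 * x2 ^+ (m + 3) * x3 ^+ (m + 4) -
 1 * x1 * x2 ^+ (m + 4) * x3 ^+ (m + 3) -
 1 * x1 ^+ (m + 3) * x2 * x3 ^+ (m + 4) +
 1 * x1 ^+ (m + 3) * x2 ^+ (m + 4) * x3 +
 1 * x1 ^+ (m + 4) * x2 * x3 ^+ (m + 3) -
 1 * x1 ^+ (m + 4) * x2 ^+ (m + 3) * x3 -
 1 * 1 * x2 ^+ (m + 3) * x3 ^+ (m + 4) +
 1 * 1 * x2 ^+ (m + 4) * x3 ^+ (m + 3) +
 1 * x1 ^+ (m + 3) * 1 * x3 ^+ (m + 4) -
 1 * x1 ^+ (m + 3) * x2 ^+ (m + 4) * 1 -
 1 * x1 ^+ (m + 4) * 1 * x3 ^+ (m + 3) +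
 1 * x1 ^+ (m + 4) * x2 ^+ (m + 3) * 1 + 1 * 1 * x2 * x3 ^+ (m + 4) -
 1 * 1 * x2 ^+ (m + 4) * x3 - 1 * x1 * 1 * x3 ^+ (m + 4) +
 1 * x1 * x2 ^+ (m + 4) * 1 + 1 * x1 ^+ (m + 4) * 1 * x3 -
 1 * x1 ^+ (m + 4) * x2 * 1 - 1 * 1 * x2 * x3 ^+ (m + 3) +
 1 * 1 * x2 ^+ (m + 3) * x3 + 1 * x1 * 1 * x3 ^+ (m + 3) -
 1 * x1 * x2 ^+ (m + 3) * 1 - 1 * x1 ^+ (m + 3) * 1 * x3 +
 1 * x1 ^+ (m + 3) * x2 * 1).
Proof.
by rewrite /MX (@det4 _ (fun r k => if r == 0 :> nat then 1
    else let x := (if r == 1 :> nat then x1 else if r == 2 :> nat then x2 else x3) in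
         if k == 0 :> nat then 1
         else if k == 1 :> nat then x
         else if k == 2 :> nat then x ^+ (m + 3)
         else x ^+ (m + 4))) /=.
Qed.

Lemma detOdd (F : fieldType) m (z : F) : z != 0 -> odd m ->
  \det (MX m (-1) z (- z^-1)) = - 2 * (z ^+ (m+3) - 1) ^+ 2 * (1 + z ^+ 2) / (z ^+ (m+3) * z).
Proof.
move=> z0 om; rewrite detX.
have e3 : (-1) ^+ (m+3) = 1 :> F by rewrite -signr_odd oddD om.
have e4 : (-1) ^+ (m+4) = -1 :> F by rewrite -signr_odd oddD om /= expr1.
have f3 : (- z^-1) ^+ (m+3) = (z ^+ (m+3))^-1 by rewrite exprNn e3 mul1r exprVn.
have f4 : (- z^-1) ^+ (m+4) = - (z^-1 * (z ^+ (m+3))^-1).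
  by rewrite exprNn e4 mulN1r addnS exprS exprVn.
have g4 : z ^+ (m+4) = z * z ^+ (m+3) by rewrite addnS exprS.
rewrite e3 e4 f3 f4 g4.
have Y0 : z ^+ (m+3) != 0 by rewrite expf_neq0.
move: Y0; set Y := z ^+ (m+3) => Y0.
field; rewrite Y0 z0 //.
Qed.

Lemma detEven (F : fieldType) m (z : F) : z != 0 -> ~~ odd m ->
  \det (MX m (-1) z (- z^-1)) = - 4 * (1 - z ^+ 2 * z ^+ (m+2)) * (z ^+ (m+2) - 1) / (z * z ^+ (m+2)).
Proof.
move=> z0 om; rewrite detX.
have e3 : (-1) ^+ (m+3) = -1 :> F by rewrite -signr_odd oddD (negbTE om) /= expr1.
have e4 : (-1) ^+ (m+4) = 1 :> F by rewrite -signr_odd oddD (negbTE om).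
have g3 : z ^+ (m+3) = z * z ^+ (m+2) by rewrite addnS exprS.
have g4 : z ^+ (m+4) = z ^+ 2 * z ^+ (m+2) by rewrite -exprD addnCA.
have f3 : (- z^-1) ^+ (m+3) = - (z * z ^+ (m+2))^-1 by rewrite exprNn e3 mulN1r exprVn g3.
have f4 : (- z^-1) ^+ (m+4) = (z ^+ 2 * z ^+ (m+2))^-1 by rewrite exprNn e4 mul1r exprVn g4.
rewrite e3 e4 f3 f4 g3 g4.
have Y0 : z ^+ (m+2) != 0 by rewrite expf_neq0.
move: Y0; set Y := z ^+ (m+2) => Y0.
field; rewrite Y0 z0 //.
Qed.
Lemma Amob0 (R : realType) : Amob (0 : R) = -1.
Proof.
rewrite /Amob rmorph0 add0r sub0r.
have i0 : ('i : R[i]) != 0 by apply/eqP => /(congr1 (@complex.Im R)) /= /eqP; rewrite oner_eq0.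
by rewrite invrN mulrN divff.
Qed.

Lemma AmobV (R : realType) (t : R) : 0 < t -> Amob t^-1 = - (Amob t)^-1.
Proof.
move=> t0; rewrite /Amob invf_div.
have nz : forall a : R, a != 0 -> a%:C + 'i != 0 /\ a%:C - 'i != 0.
  move=> a _; split; apply/eqP => /(congr1 (@complex.Im R)) /= /eqP.
    by rewrite add0r oner_eq0.
  by rewrite sub0r oppr_eq0 oner_eq0.
have t1 : t != 0 by rewrite gt_eqF.
have t2 : t^-1 != 0 by rewrite invr_eq0.
have [a1 a2] := nz _ t1; have [b1 b2] := nz _ t2.
rewrite -mulNr; apply/eqP; rewrite eqr_div //.
rewrite fmorphV /=.
have T0 : t%:C != 0 by rewrite fmorph_eq0.
rewrite -subr_eq0; apply/eqP.
have -> : ((t%:C)^-1 + 'i) * (t%:C + 'i) - - (t%:C - 'i) * ((t%:C)^-1 - 'i)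
   = 2 * (1 + 'i ^+ 2) by field.
by rewrite sqr_i subrr mulr0.
Qed.

Section S.
Variable R : realType.
Lemma sin_pi4 : 1 / 2 <= sin (pi / 4 : R).
Proof.
have h : sin (pi / 2 : R) = (cos (pi/4) * sin (pi/4)) *+ 2.
  by rewrite -sin_mulr2n; congr sin; rewrite -mulr_natr; field.
rewrite sin_pihalf in h.
have s0 : 0 <= sin (pi / 4 : R).
  have p := pi_gt0 R; apply: sin_ge0_pi; apply/andP; split; lra.
have c1 := cos_le1 (pi / 4 : R).
rewrite mulr2n in h. nra.
Qed.

Lemma ler_sin_in (x y : R) : - (pi/2) <= x -> x <= y -> y <= pi/2 -> sin x <= sin y.
Proof.
move=> h1 h2 h3; have p := pi_gt0 R.
rewrite le_eqVlt in h2; case/orP: h2 => [/eqP -> //|h2].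
apply/ltW; rewrite ltr_sin // in_itv /=; apply/andP; split; lra.
Qed.

Lemma sin_lb_base (y : R) : pi / 4 <= y <= pi / 2 -> y / pi <= sin y.
Proof.
move=> /andP[h1 h2]; have p := pi_gt0 R.
have a : y / pi <= 1 / 2 by rewrite ler_pdivrMr //; lra.
have b := sin_pi4.
have c : sin (pi / 4) <= sin y by apply: ler_sin_in; lra.
lra.
Qed.

Lemma sin_lb_k (k : nat) (y : R) : pi / 2 ^+ k.+2 <= y <= pi / 2 -> y / pi <= sin y.
Proof.
have p := pi_gt0 R.
elim: k y => [|k IH] y.
  by rewrite expr2 => h; apply: sin_lb_base; move/andP: h => [h1 h2]; apply/andP; split; lra.
move=> /andP[h1 h2].
have X0 : 0 < (2 : R) ^+ k.+2 by rewrite exprn_gt0.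
have e : pi / 2 ^+ k.+3 = (pi / 2 ^+ k.+2) / 2 :> R.
  by rewrite [in LHS]exprS; field; rewrite gt_eqF.
have q0 : 0 < pi / 2 ^+ k.+2 :> R by rewrite divr_gt0.
rewrite e in h1.
have [y4|y4] := leP (pi / 4) y.
  by apply: sin_lb_base; apply/andP; split.
have := IH (y *+ 2); rewrite sin_mulr2n => H.
have s0 : 0 <= sin y by apply: sin_ge0_pi; apply/andP; split; lra.
have c1 := cos_le1 y.
have : y *+ 2 / pi <= (cos y * sin y) *+ 2 by apply: H; apply/andP; split; rewrite mulr2n; lra.
rewrite !mulr2n => H2.
have : cos y * sin y <= sin y by rewrite ler_piMl.
move=> H3.
have : (y + y) / pi = y / pi + y / pi by rewrite mulrDl.
lra.
Qed.

Lemma sin_lb (y : R) : 0 <= y <= pi / 2 -> y / pi <= sin y.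
Proof.
move=> /andP[h1 h2]; have p := pi_gt0 R.
have [->|y0] := eqVneq y 0; first by rewrite mul0r sin0.
have yp : 0 < y by rewrite lt_neqAle eq_sym y0.
pose k := Num.truncn (pi / y).
apply: (sin_lb_k k); apply/andP; split => //.
have kk : pi / y < k.+1%:R by apply: truncnS_gt.
have e : (k.+1%:R : R) <= 2 ^+ k.+2.
  rewrite -natrX ler_nat; apply: (leq_trans (ltnW (ltn_expl k.+1 (isT : (1 < 2)%N)))).
  by rewrite leq_exp2l.
rewrite ler_pdivrMr ?exprn_gt0 //.
rewrite ltr_pdivrMr // in kk.
nra.
Qed.
End S.
Lemma expiD (R : realType) (a b : R) : expi a * expi b = expi (a + b).
Proof.
rewrite /expi sinD cosD; apply/eqP; rewrite eq_complex /=; apply/andP; split; apply/eqP; ring.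
Qed.

Lemma expiX (R : realType) (a : R) n : expi a ^+ n = expi (n%:R * a).
Proof.
elim: n => [|n IH]; first by rewrite expr0 mul0r /expi cos0 sin0.
by rewrite exprS IH expiD mulrSr mulrDl mul1r addrC.
Qed.

Lemma norm_expi (R : realType) (a : R) : `|expi a| = 1.
Proof.
by rewrite normc_def /= cos2Dsin2 sqrtr1.
Qed.

Lemma norm_expi1 (R : realType) (a : R) :
  `|expi a - 1| = (Num.sqrt (4 * sin (a / 2) ^+ 2))%:C.
Proof.
rewrite normc_def /=; congr (_ %:C); congr (Num.sqrt _).
set b := a / 2.
have -> : a = b *+ 2 by rewrite /b -mulr_natr mulfVK // pnatr_eq0.
rewrite cos_mulr2n sin_mulr2n subr0.
have h := cos2Dsin2 b.
apply/eqP; rewrite -subr_eq0; apply/eqP.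
have -> : (cos b ^+ 2 *+ 2 - 1 - 1) ^+ 2 + (cos b * sin b *+ 2) ^+ 2 - 4 * sin b ^+ 2
  = 4 * (cos b ^+ 2 - 1) * (cos b ^+ 2 + sin b ^+ 2 - 1) by ring.
by rewrite h subrr mulr0.
Qed.

Lemma sin_lin (R : realType) (d : R) : `|d| <= 1/2 -> `|d| <= `|sin (pi * d)|.
Proof.
move=> hd; have p := pi_gt0 R.
have h : `|d| <= pi * `|d| / pi by rewrite mulrAC divff ?mul1r // gt_eqF.
apply: (le_trans h).
have -> : `|sin (pi * d)| = sin (pi * `|d|).
  case: (lerP 0 d) => hd0.
    rewrite (ger0_norm hd0) ger0_norm //; apply: sin_ge0_pi; apply/andP; split.
      by rewrite mulr_ge0 // ltW.
    rewrite ger0_norm in hd => //; nra.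
  rewrite (ltr0_norm hd0) mulrN sinN ltr0_norm ?opprK //.
  rewrite -oppr_gt0 -sinN -mulrN; apply: sin_gt0_pi; apply/andP; split.
    by rewrite mulr_gt0 // oppr_gt0.
  rewrite ltr0_norm in hd => //; nra.
apply: sin_lb; apply/andP; split; first by rewrite mulr_ge0 // ltW.
nra.
Qed.

Lemma key (R : realType) (beta mu C : R) (N : nat) :
  (0 < N)%N -> 0 < beta ->
  (forall n m : int, m != 0 ->
       C / ((`|m|%:~R : R) `^ mu) <= `|beta - n%:~R / m%:~R|) ->
  ((2 * C * N%:R `^ (1 - mu))%:C <= `|expi (2 * pi * beta) ^+ N - 1|).
Proof.
move=> N0 b0 H.
have Np : (0 : R) < N%:R by rewrite ltr0n.
rewrite expiX norm_expi1 lecR.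
have -> : N%:R * (2 * pi * beta) / 2 = pi * (N%:R * beta) :> R by field.
set x := N%:R * beta.
have x0 : 0 <= x by rewrite mulr_ge0 // ltW.
pose n := Num.truncn (x + 1/2).
have [hn1 hn2] : n%:R <= x + 1/2 /\ x + 1/2 < n.+1%:R.
  by apply/andP; apply: truncn_itv; lra.
set d := x - n%:R.
have hd : `|d| <= 1/2.
  move: hn2; rewrite -[n.+1]addn1 natrD => hn2.
  rewrite ler_norml; apply/andP; split; rewrite /d; lra.
have e1 : sin (pi * x) ^+ 2 = sin (pi * d) ^+ 2.
  have -> : pi * x = pi * d + pi *+ n by rewrite /d mulrBr mulr_natr subrK.
  by rewrite alternatingn; [rewrite exprMn sqrr_sign mul1r | exact: sinDpi].
rewrite e1.
have -> : 4 * sin (pi * d) ^+ 2 = (2 * sin (pi * d)) ^+ 2 by ring.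
rewrite sqrtr_sqr normrM (ger0_norm (ler0n _ 2)).
suff : C * N%:R `^ (1 - mu) <= `|d|.
  move=> h; have := @sin_lin _ _ hd; move=> h2.
  rewrite -mulrA ler_pM2l; last by [].
  exact: le_trans h h2.
have := H (n%:Z) (N%:Z); rewrite eqz_nat -lt0n N0 => /(_ isT).
change (C / (N%:R : R) `^ mu <= `|beta - n%:R / N%:R| -> C * N%:R `^ (1 - mu) <= `|d|).
move=> h.
have -> : `|d| = N%:R * `|beta - n%:R / N%:R|.
  rewrite -[X in X * _](ger0_norm (ltW Np)) -normrM mulrBr mulrCA divff ?mulr1 ?gt_eqF //.
rewrite powRB; last by apply/implyP => _; rewrite gt_eqF.
rewrite powRr1; last exact: ltW.
have -> : C * (N%:R / N%:R `^ mu) = N%:R * (C / N%:R `^ mu) by rewrite mulrCA mulrA.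
by rewrite ler_pM2l.
Qed.
Lemma powR_shift (R : realType) (e : R) (m j : nat) : (1 <= m)%N -> (j <= 4)%N ->
  Num.min 1 (5 `^ e) * m%:R `^ e <= (m + j)%:R `^ e.
Proof.
move=> m1 j4.
have mp : (0 : R) < m%:R by rewrite ltr0n.
have mj : (m%:R : R) <= (m + j)%:R by rewrite ler_nat leq_addr.
have m5 : ((m + j)%:R : R) <= 5 * m%:R.
  rewrite -natrM ler_nat mulSn leq_add2l; exact: leq_trans j4 (leq_pmulr 4 m1).
have mjp : (0 : R) < (m + j)%:R by apply: lt_le_trans mj.
case: (lerP 0 e) => he.
  apply: le_trans (ge0_ler_powR he _ _ mj); last by rewrite nnegrE ltW.
    by rewrite ler_piMl ?powR_ge0 // ge_min lexx.
  by rewrite nnegrE ltW.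
apply: (@le_trans _ _ ((5 * m%:R) `^ e)).
  rewrite powRM ?ler0n //; apply: ler_wpM2r; first exact: powR_ge0.
  by rewrite ge_min lexx orbT.
have hf : 0 <= - e by rewrite oppr_ge0 ltW.
rewrite -[e]opprK (powRN (5 * m%:R)) (powRN (m + j)%:R) lef_pV2 ?posrE ?powR_gt0 ?mulr_gt0 ?ltr0n //.
apply: (ge0_ler_powR _ _ _ m5).
- by [].
- by rewrite nnegrE ltW.
- by rewrite nnegrE mulr_ge0 ?ler0n ?ltW.
by rewrite addn_gt0 m1.
Qed.

Lemma MmatE (R : realType) m (a1 a2 a3 : R) :
  Mmat m a1 a2 a3 = MX m (Amob a1) (Amob a2) (Amob a3).
Proof.
apply/matrixP => i j; rewrite /Mmat /MX !mxE.
case: i => [[|[|[|[|?]]]] ?] //=.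
Qed.

Theorem proposition6p2 (R : realType) (t beta mu : R) :
  0 < t ->
  0 < beta < 1 ->
  Amob t = expi (2 * pi * beta) ->
  (exists C : R, 0 < C /\
     forall n m : int, m != 0 ->
       C / ((`|m|%:~R : R) `^ mu) <= `|beta - n%:~R / m%:~R|) ->
  exists D : R, 0 < D /\
    forall m : nat, (1 <= m)%N ->
      ((D / ((m%:R : R) `^ (2 * mu - 2)))%:C <= `|\det (Mmat m 0 t t^-1)|)%R.
Proof.
move=> t0 /andP[b0 b1] Hz [C [C0 HC]].
set z := expi (2 * pi * beta).
have nz : `|z| = 1 := norm_expi _ _.
have z0 : z != 0.
  by apply/eqP => h; move: nz; rewrite h normr0 => /eqP; rewrite eq_sym oner_eq0.
set e := 1 - mu.
set k := Num.min 1 (5 `^ e).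
have k0 : 0 < k by rewrite lt_min ltr01 powR_gt0.
have B : forall m j, (1 <= m)%N -> (j <= 4)%N ->
    ((2 * C * k * m%:R `^ e)%:C <= `|z ^+ (m + j) - 1|).
  move=> m j m1 j4.
  have mj : (0 < m + j)%N by rewrite addn_gt0 m1.
  apply: le_trans (@key R beta mu C (m + j) mj b0 HC).
  have h := @powR_shift R e m j m1 j4.
  by rewrite lecR -/e -!mulrA ler_pM2l // ler_pM2l.
have K4 : 1 + z ^+ 2 != 0.
  apply/eqP; rewrite addrC => /eqP; rewrite addr_eq0 => /eqP h2.
  have := B 1%N 3%N isT isT.
  have -> : z ^+ (1 + 3) = 1 by rewrite (_ : (1 + 3 = 2 * 2)%N) // exprM h2 sqrrN expr1n.
  rewrite subrr normr0 lecR powR1.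
  have : 0 < 2 * C * k * 1 by rewrite !mulr_gt0.
  by move=> h3 h4; move: (lt_le_trans h3 h4); rewrite ltxx.
set Kc := `|1 + z ^+ 2|.
have KE : Kc = (complex.Re Kc)%:C by rewrite /Kc normc_def.
set K := complex.Re Kc.
have Kp : 0 < K by rewrite -ltcR -KE normr_gt0.
exists (Num.min (2 * K) 4 * (2 * C * k) ^+ 2); split.
  apply: mulr_gt0; last by rewrite exprn_gt0 // !mulr_gt0.
  by rewrite lt_min; apply/andP; split; [rewrite mulr_gt0|].
move=> m m1.
have Mp : (0 : R) < m%:R by rewrite ltr0n.
rewrite (_ : 2 * mu - 2 = - (e + e)); last by rewrite /e; ring.
rewrite powRN invrK powRD; last by apply/implyP => _; rewrite gt_eqF.
rewrite MmatE.
rewrite Amob0 (@AmobV R t t0) Hz -/z.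
set b := 2 * C * k * m%:R `^ e.
have b0' : 0 <= b by rewrite /b !mulr_ge0 ?powR_ge0 // ltW.
have -> : Num.min (2 * K) 4 * (2 * C * k) ^+ 2 * (m%:R `^ e * m%:R `^ e)
   = Num.min (2 * K) 4 * (b * b) by rewrite /b; ring.
have Bc : 0 <= b%:C by rewrite ler0c.
case: (boolP (odd m)) => om.
  rewrite detOdd //.
  rewrite !normrM normfV normrM !normrX nz expr1n mulr1 invr1 mulr1 normrN normr_nat -/Kc KE -/K.
  apply: (@le_trans _ _ ((2 * K) * (b * b))%:C).
    rewrite lecR; apply: ler_wpM2r; first by rewrite mulr_ge0.
    by rewrite ge_min lexx.
  have -> : ((2 * K) * (b * b))%:C = 2 * (b%:C * b%:C) * K%:C.
    by rewrite !rmorphM rmorph_nat /=; ring.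
  apply: ler_wpM2r; first by rewrite ler0c ltW.
  apply: ler_wpM2l; first by rewrite ler0n.
  have h := B m 3%N m1 isT.
  by apply: ler_pM.
rewrite detEven //.
rewrite !normrM normfV normrM !normrX nz expr1n mulr1 invr1 mulr1 normrN normr_nat.
rewrite -exprD (addnC 2%N) -addnA distrC.
apply: (@le_trans _ _ (4 * (b * b))%:C).
  rewrite lecR; apply: ler_wpM2r; first by rewrite mulr_ge0.
  by rewrite ge_min lexx orbT.
have -> : (4 * (b * b))%:C = 4 * b%:C * b%:C by rewrite !rmorphM rmorph_nat /= mulrA.
have h1 := B m 4%N m1 isT.
have h2 := B m 2%N m1 isT.
rewrite -mulrA -[X in _ <= X]mulrA.
apply: ler_wpM2l; first by rewrite ler0n.
by apply: ler_pM.
Qed.
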